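(* Let $\phi_1,\phi_2\in D=\{z\in\mathbb{C};|z|<1\}$ and let $Z$ be a random variable on the unit circle $\partial D$ with density, with respect to arc length, $$f(z)=\frac{1}{2\pi}\frac{|1-\phi_1\overline{\phi_2}|^2}{1-|\phi_1\overline{\phi_2}|^2}\frac{1-|\phi_1|^2}{|z-\phi_1|^2}\frac{1-|\phi_2|^2}{|z-\phi_2|^2}.$$ Then $E(Z)=0$ if and only if $\phi_1=-\phi_2$. *)

(* Defs.v *)
From Stdlib Require Import Reals.
From Coquelicot Require Import Coquelicot.
Open Scope R_scope.

Definition in_disc (z : C) : Prop := Cmod z < 1.

Definition cis (t : R) : C := (cos t, sin t).

Definition dens (phi1 phi2 : C) (z : C) : R :=
  (1 / (2 * PI)) *
  ((Cmod (1 - phi1 * Cconj phi2)%C) ^ 2 / (1 - (Cmod (phi1 * Cconj phi2)%C) ^ 2)) *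
  ((1 - Cmod phi1 ^ 2) / (Cmod (z - phi1)%C) ^ 2) *
  ((1 - Cmod phi2 ^ 2) / (Cmod (z - phi2)%C) ^ 2).

(* E(Z) = \int_{\partial D} z f(z) |dz| = \int_0^{2pi} e^{it} f(e^{it}) dt *)
Definition expect (phi1 phi2 : C) : C :=
  @RInt C_R_CompleteNormedModule (fun t : R => (RtoC (dens phi1 phi2 (cis t)) * cis t)%C) 0 (2 * PI).

(* Main.v *)
Require Import Defs.
From Stdlib Require Import Reals Lra Lia Psatz.
From Coquelicot Require Import Coquelicot.
Open Scope R_scope.

Lemma isC_fst (f : R -> C) a b l : is_RInt f a b l -> is_RInt (fun t => fst (f t)) a b (fst l).
Proof. intros H. exact (is_RInt_fct_extend_fst (U:=R_NormedModule) (V:=R_NormedModule) f a b l H). Qed.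
Lemma isC_snd (f : R -> C) a b l : is_RInt f a b l -> is_RInt (fun t => snd (f t)) a b (snd l).
Proof. intros H. exact (is_RInt_fct_extend_snd (U:=R_NormedModule) (V:=R_NormedModule) f a b l H). Qed.
Lemma isC_pair (f : R -> C) a b l1 l2 : is_RInt (fun t => fst (f t)) a b l1 -> is_RInt (fun t => snd (f t)) a b l2 -> is_RInt f a b (l1,l2).
Proof. intros H H0. exact (is_RInt_fct_extend_pair (U:=R_NormedModule) (V:=R_NormedModule) f a b _ _ H H0). Qed.

Lemma isC_mul (f : R -> C) a b l c : is_RInt f a b l -> is_RInt (fun t => c * f t)%C a b (c * l)%C.
Proof.
  intros H. destruct c as [c1 c2]. destruct l as [l1 l2].
  pose proof (isC_fst _ _ _ _ H) as H1. pose proof (isC_snd _ _ _ _ H) as H2. simpl in H1, H2.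
  apply isC_pair.
  - eapply is_RInt_ext; [| apply (is_RInt_minus _ _ _ _ _ _ (is_RInt_scal _ _ _ c1 _ H1) (is_RInt_scal _ _ _ c2 _ H2))].
    intros x _. simpl. reflexivity.
  - eapply is_RInt_ext; [| apply (is_RInt_plus _ _ _ _ _ _ (is_RInt_scal _ _ _ c1 _ H2) (is_RInt_scal _ _ _ c2 _ H1))].
    intros x _. simpl. reflexivity.
Qed.

Lemma contC (f : R -> C) x : continuous (fun t => fst (f t)) x -> continuous (fun t => snd (f t)) x -> continuous f x.
Proof.
  intros H1 H2. apply filterlim_locally. intros eps.
  apply filterlim_locally with (eps := eps) in H1.
  apply filterlim_locally with (eps := eps) in H2.
  generalize (filter_and _ _ H1 H2). apply filter_imp. intros t [B1 B2].
  split; assumption.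
Qed.
Lemma cont_fst (f : R -> C) x : continuous f x -> continuous (fun t => fst (f t)) x.
Proof. intros H. apply filterlim_locally. intros eps.
  apply filterlim_locally with (eps := eps) in H. revert H. apply filter_imp. intros t [B1 B2]. exact B1. Qed.
Lemma cont_snd (f : R -> C) x : continuous f x -> continuous (fun t => snd (f t)) x.
Proof. intros H. apply filterlim_locally. intros eps.
  apply filterlim_locally with (eps := eps) in H. revert H. apply filter_imp. intros t [B1 B2]. exact B2. Qed.
Lemma cR_mult (f g : R -> R) x : continuous f x -> continuous g x -> continuous (fun t => f t * g t) x.
Proof. intros. apply (continuous_mult (K:=R_AbsRing) f g x); auto. Qed.
Lemma cR_plus (f g : R -> R) x : continuous f x -> continuous g x -> continuous (fun t => f t + g t) x.
Proof. intros. apply (continuous_plus (K:=R_AbsRing) (V:=R_NormedModule) f g x); auto. Qed.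
Lemma cR_opp (f : R -> R) x : continuous f x -> continuous (fun t => - f t) x.
Proof. intros. apply (continuous_opp (K:=R_AbsRing) (V:=R_NormedModule) f x); auto. Qed.
Lemma cR_minus (f g : R -> R) x : continuous f x -> continuous g x -> continuous (fun t => f t - g t) x.
Proof. intros. unfold Rminus. apply cR_plus; auto. apply cR_opp; auto. Qed.
Lemma cC_mult (f g : R -> C) x : continuous f x -> continuous g x -> continuous (fun t => f t * g t)%C x.
Proof. intros Hf Hg. apply contC; simpl.
  - apply cR_minus; apply cR_mult; first [apply cont_fst|apply cont_snd]; auto.
  - apply cR_plus; apply cR_mult; first [apply cont_fst|apply cont_snd]; auto.
Qed.
Lemma cC_plus (f g : R -> C) x : continuous f x -> continuous g x -> continuous (fun t => f t + g t)%C x.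
Proof. intros Hf Hg. apply contC; simpl; apply cR_plus; first [apply cont_fst|apply cont_snd]; auto. Qed.
Lemma cC_minus (f g : R -> C) x : continuous f x -> continuous g x -> continuous (fun t => f t - g t)%C x.
Proof. intros Hf Hg. apply contC; simpl; apply cR_minus; first [apply cont_fst|apply cont_snd]; auto. Qed.
Lemma cC_const (c : C) x : continuous (fun _ : R => c) x.
Proof. apply continuous_const. Qed.
Lemma cC_cis x : continuous cis x.
Proof. apply contC; simpl. apply continuous_cos_comp, continuous_id. apply continuous_sin_comp, continuous_id. Qed.
Lemma cC_inv (f : R -> C) x : continuous f x -> f x <> 0%C -> continuous (fun t => / f t)%C x.
Proof. intros Hf Hn.
  assert (Hd : fst (f x) ^ 2 + snd (f x) ^ 2 <> 0).
  { intro E. apply Hn. destruct (f x) as [u v]. simpl in E.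
    assert (u = 0) by nra. assert (v = 0) by nra. subst. reflexivity. }
  pose proof (cont_fst _ _ Hf) as F1. pose proof (cont_snd _ _ Hf) as F2.
  assert (D : continuous (fun t => fst (f t) ^ 2 + snd (f t) ^ 2) x).
  { apply cR_plus; simpl; apply cR_mult; auto; apply cR_mult; auto; apply continuous_const. }
  apply contC; simpl.
  - apply cR_mult; auto. apply continuous_Rinv_comp; auto.
  - apply cR_mult. apply cR_opp; auto. apply continuous_Rinv_comp; auto.
Qed.

Lemma cis_mult x y : (cis x * cis y)%C = cis (x + y).
Proof. unfold cis, Cmult. simpl. rewrite cos_plus, sin_plus. f_equal; ring. Qed.
Lemma cis_pow t n : (cis t ^ n)%C = cis (INR n * t).
Proof. induction n.
  - simpl. unfold cis. rewrite Rmult_0_l, cos_0, sin_0. reflexivity.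
  - change (cis t ^ S n)%C with (cis t * cis t ^ n)%C. rewrite IHn, cis_mult. f_equal. rewrite S_INR. ring. Qed.
Lemma Cmod_cis t : Cmod (cis t) = 1.
Proof. unfold Cmod, cis; simpl. replace (cos t * (cos t * 1) + sin t * (sin t * 1)) with 1 by (pose proof (sin2_cos2 t); unfold Rsqr in *; nra). apply sqrt_1. Qed.
Lemma cis_nz t : cis t <> 0%C.
Proof. intro E. pose proof (Cmod_cis t). rewrite E, Cmod_0 in H. lra. Qed.
Lemma conj_cis t : Cconj (cis t) = (/ cis t)%C.
Proof. assert (H : (cis t * Cconj (cis t))%C = 1%C).
  { rewrite <- Cmod2_conj, Cmod_cis. f_equal. ring. }
  replace (/ cis t)%C with (/ cis t * (cis t * Cconj (cis t)))%C by (rewrite H; ring).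
  field. apply cis_nz. Qed.

Lemma sin_2nPI n : sin (INR n * (2 * PI)) = 0.
Proof. pose proof (sin_period 0 n). rewrite sin_0, Rplus_0_l in H. rewrite <- H. f_equal; ring. Qed.
Lemma cos_2nPI n : cos (INR n * (2 * PI)) = 1.
Proof. pose proof (cos_period 0 n). rewrite cos_0, Rplus_0_l in H. rewrite <- H. f_equal; ring. Qed.

Lemma isR_eq {V : NormedModule R_AbsRing} (f : R -> V) a b l l' : is_RInt f a b l -> l = l' -> is_RInt f a b l'.
Proof. intros H E; subst; exact H. Qed.

Lemma int_cis_pow n : (1 <= n)%nat -> is_RInt (fun t => (cis t ^ n)%C) 0 (2*PI) (RtoC 0).
Proof.
  intros Hn. assert (Hn' : INR n <> 0). { apply not_0_INR. lia. }
  apply (is_RInt_ext (fun t => cis (INR n * t))). { intros; rewrite cis_pow; auto. }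
  apply isC_pair; simpl.
  - assert (H := is_RInt_derive (fun t => sin (INR n * t) / INR n) (fun t => cos (INR n * t)) 0 (2*PI)).
    simpl in H. rewrite sin_2nPI, Rmult_0_r, sin_0 in H.
    eapply isR_eq. apply H. intros. auto_derive; auto. field; auto.
    intros. apply continuous_cos_comp. apply (continuous_scal_r (K:=R_AbsRing) (V:=R_NormedModule)), continuous_id.
    unfold minus, plus, opp; simpl; field; auto.
  - assert (H := is_RInt_derive (fun t => - cos (INR n * t) / INR n) (fun t => sin (INR n * t)) 0 (2*PI)).
    simpl in H. rewrite cos_2nPI, Rmult_0_r, cos_0 in H.
    eapply isR_eq. apply H. intros. auto_derive; auto. field; auto.
    intros. apply continuous_sin_comp. apply (continuous_scal_r (K:=R_AbsRing) (V:=R_NormedModule)), continuous_id.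
    unfold minus, plus, opp; simpl; field; auto.
Qed.

Lemma vanish (I : nat -> C) (p : C) M : Cmod p < 1 ->
  (forall m, (1<=m)%nat -> I m = (p * I (S m))%C) -> (forall m, Cmod (I m) <= M) ->
  forall m, (1<=m)%nat -> I m = RtoC 0.
Proof.
  intros Hp Hrec HM m Hm.
  assert (K : forall N m, (1<=m)%nat -> I m = (p ^ N * I (m + N)%nat)%C).
  { induction N; intros k Hk. simpl. rewrite Nat.add_0_r. ring.
    rewrite IHN by auto. rewrite (Hrec (k+N)%nat) by lia.
    replace (S (k+N)) with (k + S N)%nat by lia. simpl. ring. }
  destruct (Req_dec (Cmod (I m)) 0) as [E|E]. apply Cmod_eq_0; auto.
  exfalso. assert (Hpos : 0 < Cmod (I m)) by (pose proof (Cmod_ge_0 (I m)); lra).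
  assert (HM0 : 0 <= M) by (pose proof (HM m); pose proof (Cmod_ge_0 (I m)); lra).
  assert (Ha : Rabs (Cmod p) < 1) by (rewrite Rabs_pos_eq; auto; apply Cmod_ge_0).
  destruct (pow_lt_1_zero _ Ha (Cmod (I m) / (M + 1))) as [N HN].
  { apply Rdiv_lt_0_compat; lra. }
  specialize (HN N (le_n _)). rewrite Rabs_pos_eq in HN by (apply pow_le, Cmod_ge_0).
  pose proof (K N m Hm) as KN. apply (f_equal Cmod) in KN. rewrite Cmod_mult, Cmod_pow in KN.
  pose proof (HM (m+N)%nat).
  assert (Cmod p ^ N * Cmod (I (m+N)%nat) <= Cmod p ^ N * M).
  { apply Rmult_le_compat_l; auto. apply pow_le, Cmod_ge_0. }
  assert (Cmod p ^ N * (M+1) < Cmod (I m)).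
  { apply Rmult_lt_compat_r with (r := M+1) in HN; [|lra].
    unfold Rdiv in HN. rewrite Rmult_assoc, Rinv_l in HN; lra. }
  nra.
Qed.

Definition U (p : C) (t : R) : C := (/ (1 - p * cis t))%C.
Definition G (n : nat) (p q : C) (t : R) : C := (cis t ^ n * U p t * U q t)%C.

Lemma den_ge p t : Cmod p < 1 -> 1 - Cmod p <= Cmod (1 - p * cis t)%C.
Proof. intros Hp. pose proof (Cmod_triangle (1 - p * cis t)%C (p * cis t)%C).
  replace (1 - p * cis t + p * cis t)%C with (RtoC 1) in H by ring.
  rewrite Cmod_1, Cmod_mult, Cmod_cis in H. lra. Qed.
Lemma den_nz p t : Cmod p < 1 -> (1 - p * cis t)%C <> RtoC 0.
Proof. intros Hp E. pose proof (den_ge p t Hp). rewrite E, Cmod_0 in H. lra. Qed.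
Lemma U_bound p t : Cmod p < 1 -> Cmod (U p t) <= / (1 - Cmod p).
Proof. intros Hp. unfold U. rewrite Cmod_inv by (apply den_nz; auto).
  apply Rinv_le_contravar. lra. apply den_ge; auto. Qed.
Lemma G_bound n p q t : Cmod p < 1 -> Cmod q < 1 -> Cmod (G n p q t) <= / (1 - Cmod p) * / (1 - Cmod q).
Proof. intros Hp Hq. unfold G. rewrite !Cmod_mult, Cmod_pow, Cmod_cis, pow1, Rmult_1_l.
  apply Rmult_le_compat; try apply Cmod_ge_0; apply U_bound; auto. Qed.

Lemma cont_pow n t : continuous (fun t => (cis t ^ n)%C) t.
Proof. induction n. apply cC_const.
  apply (cC_mult cis (fun t => (cis t ^ n)%C)); auto. apply cC_cis. Qed.
Lemma cont_U p t : Cmod p < 1 -> continuous (U p) t.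
Proof. intros Hp. unfold U. apply cC_inv. apply cC_minus. apply cC_const.
  apply cC_mult. apply cC_const. apply cC_cis. apply den_nz; auto. Qed.
Lemma cont_G n p q t : Cmod p < 1 -> Cmod q < 1 -> continuous (G n p q) t.
Proof. intros. unfold G. apply cC_mult. apply cC_mult. apply cont_pow. apply cont_U; auto. apply cont_U; auto. Qed.

Lemma is_G n p q : Cmod p < 1 -> Cmod q < 1 -> is_RInt (G n p q) 0 (2*PI) (@RInt C_R_CompleteNormedModule (G n p q) 0 (2*PI)).
Proof. intros. apply (RInt_correct (V:=C_R_CompleteNormedModule)).
 apply (ex_RInt_continuous (V:=C_R_CompleteNormedModule)). intros; apply cont_G; auto. Qed.

Definition IG n p q : C := @RInt C_R_CompleteNormedModule (G n p q) 0 (2*PI).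

Lemma isC_uniq (f : R -> C) a b l : is_RInt f a b l -> @RInt C_R_CompleteNormedModule f a b = l.
Proof. intros H. apply (is_RInt_unique (V:=C_R_CompleteNormedModule)). exact H. Qed.

Lemma U_rec p t : Cmod p < 1 -> U p t = (1 + p * cis t * U p t)%C.
Proof. intros Hp. unfold U. pose proof (den_nz p t Hp). field. auto. Qed.

Lemma U0 t : U 0 t = RtoC 1.
Proof. unfold U. replace (1 - 0 * cis t)%C with (RtoC 1) by ring. field. Qed.

Lemma G_rec n p q t : Cmod p < 1 -> G n p q t = (G n q 0 t + p * G (S n) p q t)%C.
Proof. intros Hp. unfold G. rewrite U0. change (cis t ^ S n)%C with (cis t * cis t ^ n)%C.
  rewrite (U_rec p t Hp) at 1. ring. Qed.

Lemma C0_lt1 : Cmod (RtoC 0) < 1.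
Proof. rewrite Cmod_0. lra. Qed.

Lemma IG_rec n p q : Cmod p < 1 -> Cmod q < 1 -> IG n p q = (IG n q 0 + p * IG (S n) p q)%C.
Proof. intros Hp Hq. unfold IG at 1. apply isC_uniq.
  eapply is_RInt_ext. 2: apply (is_RInt_plus _ _ _ _ _ _ (is_G n q 0 Hq C0_lt1) (isC_mul _ _ _ _ p (is_G (S n) p q Hp Hq))).
  intros x _. rewrite (G_rec n p q x Hp). reflexivity. Qed.

Lemma Gn00 n x : G n 0 0 x = (cis x ^ n)%C.
Proof. unfold G. rewrite U0. ring. Qed.
Lemma IG00 n : (1 <= n)%nat -> IG n 0 0 = RtoC 0.
Proof. intros Hn. apply isC_uniq. eapply is_RInt_ext. 2: apply (int_cis_pow n Hn).
  intros x _. symmetry. apply Gn00. Qed.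
Lemma IG000 : IG 0 0 0 = RtoC (2*PI).
Proof. apply isC_uniq. eapply isR_eq. eapply is_RInt_ext. 2: apply (is_RInt_const (V:=C_R_NormedModule) 0 (2*PI) (RtoC 1)).
  intros x _. rewrite Gn00. reflexivity.
  rewrite scal_R_Cmult, Rminus_0_r, Cmult_1_r. reflexivity. Qed.

Lemma normC (x : C) : @norm R_AbsRing C_R_NormedModule x = Cmod x.
Proof. destruct x. unfold norm. simpl. unfold prod_norm, Cmod. simpl. f_equal.
  unfold norm; simpl. unfold abs; simpl. rewrite !Rmult_1_r, <- !Rabs_mult, !Rabs_right; try reflexivity; apply Rle_ge, Rle_0_sqr. Qed.

Lemma IG_bound n p q : Cmod p < 1 -> Cmod q < 1 -> Cmod (IG n p q) <= 2*PI * (/ (1 - Cmod p) * / (1 - Cmod q)).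
Proof. intros Hp Hq. pose proof (norm_RInt_le_const (V:=C_R_NormedModule) (G n p q) 0 (2*PI) (IG n p q) (/ (1 - Cmod p) * / (1 - Cmod q))) as H.
  rewrite normC, Rminus_0_r in H. apply H.
  pose proof PI_RGT_0; lra. intros; rewrite normC; apply G_bound; auto. apply is_G; auto. Qed.

Lemma IGq0 n q : Cmod q < 1 -> (1 <= n)%nat -> IG n q 0 = RtoC 0.
Proof. intros Hq Hn. apply (vanish (fun m => IG m q 0) q (2*PI * (/ (1 - Cmod q) * / (1 - Cmod 0)))); auto.
  intros m Hm. simpl. rewrite IG_rec by (auto; apply C0_lt1). rewrite IG00 by auto. ring.
  intros m. apply IG_bound; auto. apply C0_lt1. Qed.
Lemma IGpq n p q : Cmod p < 1 -> Cmod q < 1 -> (1 <= n)%nat -> IG n p q = RtoC 0.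
Proof. intros Hp Hq Hn. apply (vanish (fun m => IG m p q) p (2*PI * (/ (1 - Cmod p) * / (1 - Cmod q)))); auto.
  intros m Hm. simpl. rewrite IG_rec by auto. rewrite IGq0 by auto. ring.
  intros m. apply IG_bound; auto. Qed.
Lemma IG0q0 q : Cmod q < 1 -> IG 0 q 0 = RtoC (2*PI).
Proof. intros Hq. rewrite IG_rec by (auto; apply C0_lt1). rewrite IG000, IGq0 by auto. ring. Qed.
Lemma IG0pq p q : Cmod p < 1 -> Cmod q < 1 -> IG 0 p q = RtoC (2*PI).
Proof. intros Hp Hq. rewrite IG_rec by auto. rewrite IG0q0, IGpq by auto. ring. Qed.

Lemma isC_conj (f : R -> C) a b l : is_RInt f a b l -> is_RInt (fun t => Cconj (f t)) a b (Cconj l).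
Proof. intros H. destruct l as [l1 l2].
  pose proof (isC_fst _ _ _ _ H) as H1. pose proof (isC_snd _ _ _ _ H) as H2. simpl in H1, H2.
  apply isC_pair. exact H1. simpl. apply (is_RInt_opp _ _ _ _ H2). Qed.

Lemma isIG n p q : Cmod p < 1 -> Cmod q < 1 -> is_RInt (G n p q) 0 (2*PI) (IG n p q).
Proof. apply is_G. Qed.

Lemma isC_plus (f g : R -> C) a b l1 l2 : is_RInt f a b l1 -> is_RInt g a b l2 -> is_RInt (fun t => f t + g t)%C a b (l1 + l2)%C.
Proof. intros H1 H2. exact (is_RInt_plus _ _ _ _ _ _ H1 H2). Qed.
Lemma isC_minus (f g : R -> C) a b l1 l2 : is_RInt f a b l1 -> is_RInt g a b l2 -> is_RInt (fun t => f t - g t)%C a b (l1 - l2)%C.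
Proof. intros H1 H2. exact (is_RInt_minus _ _ _ _ _ _ H1 H2). Qed.

Lemma Cconj_R r : Cconj (RtoC r) = RtoC r.
Proof. unfold Cconj, RtoC. simpl. f_equal. ring. Qed.
Ltac toC := match goal with |- ?x = ?y => change (@eq C x y) end.

Lemma zbarU p : Cmod p < 1 -> is_RInt (fun t => Cconj (cis t) * U p t)%C 0 (2*PI) (p * RtoC (2*PI))%C.
Proof. intros Hp.
  eapply isR_eq. eapply is_RInt_ext.
  2: apply (isC_plus _ _ _ _ _ _ (isC_conj _ _ _ _ (isIG 1 0 0 C0_lt1 C0_lt1)) (isC_mul _ _ _ _ p (isIG 0 p 0 Hp C0_lt1))).
  intros t _. cbv beta. rewrite Gn00. unfold G. rewrite U0. rewrite (U_rec p t Hp) at 2. rewrite conj_cis.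
  replace (cis t ^ 1)%C with (cis t) by ring. replace (cis t ^ 0)%C with (RtoC 1) by ring. rewrite conj_cis.
  assert (cis t <> RtoC 0) by apply cis_nz. match goal with |- ?x = ?y => change (@eq C x y) end. field; auto.
  match goal with |- ?x = ?y => change (@eq C x y) end. rewrite IG00, IG0q0, Cconj_R by auto. ring.
Qed.

Lemma zbarUU p q : Cmod p < 1 -> Cmod q < 1 -> is_RInt (fun t => Cconj (cis t) * U p t * U q t)%C 0 (2*PI) ((p + q) * RtoC (2*PI))%C.
Proof. intros Hp Hq.
  eapply isR_eq. eapply is_RInt_ext.
  2: apply (isC_plus _ _ _ _ _ _ (zbarU q Hq) (isC_mul _ _ _ _ p (isIG 0 p q Hp Hq))).
  intros t _. cbv beta. unfold G. rewrite (U_rec p t Hp) at 2. rewrite conj_cis.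
  replace (cis t ^ 0)%C with (RtoC 1) by ring.
  assert (cis t <> RtoC 0) by apply cis_nz. toC. field; auto.
  toC. rewrite IG0pq by auto. ring.
Qed.

Lemma nz1 w : Cmod w < 1 -> (1 - w)%C <> RtoC 0.
Proof. intros Hw E. assert (w = RtoC 1). { replace w with (1 - (1 - w))%C by ring. rewrite E. ring. }
  rewrite H, Cmod_1 in Hw. lra. Qed.
Lemma nzd z w : Cmod z = 1 -> Cmod w < 1 -> (z - w)%C <> RtoC 0.
Proof. intros Hz Hw E. assert (z = w). { replace z with ((z - w) + w)%C by ring. rewrite E. ring. }
  subst. lra. Qed.
Lemma Cmod_invcis t : Cmod (/ cis t) = 1.
Proof. rewrite Cmod_inv by apply cis_nz. rewrite Cmod_cis. apply Rinv_1. Qed.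

Lemma RtoC_P a z : Cmod z = 1 -> Cmod a < 1 ->
  RtoC ((1 - Cmod a ^ 2) / Cmod (z - a)%C ^ 2) = ((1 - a * Cconj a) / ((z - a) * (Cconj z - Cconj a)))%C.
Proof. intros Hz Ha. rewrite RtoC_div. rewrite RtoC_minus, !Cmod2_conj, Cminus_conj. reflexivity.
  intro E. apply (nzd z a Hz Ha). apply Cmod_eq_0. destruct (Req_dec (Cmod (z - a)%C) 0) as [E2|E2]; auto. exfalso. exact (pow_nonzero _ 2 E2 E). Qed.

Definition Kc (a b : C) : C := RtoC (1/(2*PI) * ((Cmod (1 - a * Cconj b)%C) ^ 2 / (1 - (Cmod (a * Cconj b)%C) ^ 2))).

Lemma Cmod_conj_lt a : Cmod a < 1 -> Cmod (Cconj a) < 1.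
Proof. rewrite Cmod_conj. auto. Qed.

Lemma pointwise a b t : Cmod a < 1 -> Cmod b < 1 ->
 (RtoC (dens a b (cis t)) * cis t)%C =
 (Kc a b * (G 1 (Cconj a) (Cconj b) t + /(1 - Cconj a * b) * (G 1 (Cconj a) (RtoC 0) t + Cconj (Cconj (cis t) * U (Cconj b) t) - G 1 (RtoC 0) (RtoC 0) t)
   + /(1 - a * Cconj b) * (Cconj (Cconj (cis t) * U (Cconj a) t) + G 1 (Cconj b) (RtoC 0) t - G 1 (RtoC 0) (RtoC 0) t)
   + Cconj (Cconj (cis t) * U (Cconj a) t * U (Cconj b) t) - G 1 (Cconj a) (RtoC 0) t - Cconj (Cconj (cis t) * U (Cconj a) t)
   - G 1 (Cconj b) (RtoC 0) t - Cconj (Cconj (cis t) * U (Cconj b) t) + G 1 (RtoC 0) (RtoC 0) t))%C.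
Proof.
  intros Ha Hb.
  pose proof (Cmod_conj_lt a Ha) as Ha'. pose proof (Cmod_conj_lt b Hb) as Hb'.
  unfold dens, Kc. rewrite !RtoC_mult. rewrite !RtoC_P by (auto; apply Cmod_cis).
  unfold G. rewrite !U0. unfold U.
  rewrite !Cmult_conj. rewrite !Cinv_conj by (apply den_nz; auto).
  rewrite !Cminus_conj, !Cmult_conj, !Cconj_R, !Cconj_conj, !conj_cis.
  generalize (RtoC (1 / (2 * PI))) (RtoC (Cmod (1 - a * Cconj b) ^ 2 / (1 - Cmod (a * Cconj b) ^ 2))).
  intros k1 k2.
  assert (Hz : cis t <> RtoC 0) by apply cis_nz.
  assert (H1 : (1 - Cconj a * cis t)%C <> RtoC 0) by (apply den_nz; auto).
  assert (H2 : (1 - Cconj b * cis t)%C <> RtoC 0) by (apply den_nz; auto).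
  assert (H3 : (1 - a * / cis t)%C <> RtoC 0) by (apply nz1; rewrite Cmod_mult, Cmod_invcis; lra).
  assert (H4 : (1 - b * / cis t)%C <> RtoC 0) by (apply nz1; rewrite Cmod_mult, Cmod_invcis; lra).
  assert (H5 : (cis t - a)%C <> RtoC 0) by (apply nzd; auto; apply Cmod_cis).
  assert (H6 : (cis t - b)%C <> RtoC 0) by (apply nzd; auto; apply Cmod_cis).
  assert (H7 : (/ cis t - Cconj a)%C <> RtoC 0) by (apply nzd; auto; apply Cmod_invcis).
  assert (H8 : (/ cis t - Cconj b)%C <> RtoC 0) by (apply nzd; auto; apply Cmod_invcis).
  assert (H9 : (1 - Cconj a * b)%C <> RtoC 0).
  { apply nz1. rewrite Cmod_mult. pose proof (Cmod_ge_0 (Cconj a)). pose proof (Cmod_ge_0 b). nra. }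
  assert (H10 : (1 - a * Cconj b)%C <> RtoC 0).
  { apply nz1. rewrite Cmod_mult. pose proof (Cmod_ge_0 a). pose proof (Cmod_ge_0 (Cconj b)). nra. }
  set (z := cis t) in *. clearbody z. set (ac := Cconj a) in *. set (bc := Cconj b) in *. clearbody ac bc.
  field. repeat split; auto.
Qed.

Lemma expect_val a b : Cmod a < 1 -> Cmod b < 1 ->
  expect a b = (Kc a b * (RtoC (2*PI) * (b / (1 - Cconj a * b) + a / (1 - a * Cconj b))))%C.
Proof.
  intros Ha Hb.
  pose proof (Cmod_conj_lt a Ha) as Ha'. pose proof (Cmod_conj_lt b Hb) as Hb'.
  pose proof (isC_mul _ _ _ _ (Kc a b)
   (isC_plus _ _ _ _ _ _
    (isC_minus _ _ _ _ _ _
     (isC_minus _ _ _ _ _ _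
      (isC_minus _ _ _ _ _ _
       (isC_minus _ _ _ _ _ _
        (isC_plus _ _ _ _ _ _
         (isC_plus _ _ _ _ _ _
          (isC_plus _ _ _ _ _ _
           (isIG 1 _ _ Ha' Hb')
           (isC_mul _ _ _ _ (/(1 - Cconj a * b))%C
             (isC_minus _ _ _ _ _ _ (isC_plus _ _ _ _ _ _ (isIG 1 _ _ Ha' C0_lt1) (isC_conj _ _ _ _ (zbarU _ Hb'))) (isIG 1 _ _ C0_lt1 C0_lt1))))
          (isC_mul _ _ _ _ (/(1 - a * Cconj b))%C
             (isC_minus _ _ _ _ _ _ (isC_plus _ _ _ _ _ _ (isC_conj _ _ _ _ (zbarU _ Ha')) (isIG 1 _ _ Hb' C0_lt1)) (isIG 1 _ _ C0_lt1 C0_lt1))))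
         (isC_conj _ _ _ _ (zbarUU _ _ Ha' Hb')))
        (isIG 1 _ _ Ha' C0_lt1))
       (isC_conj _ _ _ _ (zbarU _ Ha')))
      (isIG 1 _ _ Hb' C0_lt1))
     (isC_conj _ _ _ _ (zbarU _ Hb')))
    (isIG 1 _ _ C0_lt1 C0_lt1))) as BIG.
  unfold expect. apply isC_uniq.
  eapply isR_eq. eapply is_RInt_ext; [| exact BIG].
  intros t _. cbv beta. toC. rewrite <- pointwise by auto. reflexivity.
  toC. rewrite !IGpq by (auto; apply C0_lt1).
  rewrite !Cmult_conj, !Cplus_conj, !Cconj_conj, !Cconj_R.
  assert (H9 : (1 - Cconj a * b)%C <> RtoC 0).
  { apply nz1. rewrite Cmod_mult. pose proof (Cmod_ge_0 (Cconj a)). pose proof (Cmod_ge_0 b). nra. }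
  assert (H10 : (1 - a * Cconj b)%C <> RtoC 0).
  { apply nz1. rewrite Cmod_mult. pose proof (Cmod_ge_0 a). pose proof (Cmod_ge_0 (Cconj b)). nra. }
  field. auto.
Qed.

Lemma Kc_nz a b : Cmod a < 1 -> Cmod b < 1 -> Kc a b <> RtoC 0.
Proof. intros Ha Hb. unfold Kc.
  assert (HP := PI_RGT_0).
  assert (Hm : Cmod (a * Cconj b)%C < 1).
  { rewrite Cmod_mult, Cmod_conj. pose proof (Cmod_ge_0 a). pose proof (Cmod_ge_0 b). nra. }
  assert (Hn : 0 < Cmod (1 - a * Cconj b)%C).
  { apply Cmod_gt_0. apply nz1; auto. }
  assert (0 < 1 - Cmod (a * Cconj b)%C ^ 2).
  { pose proof (Cmod_ge_0 (a * Cconj b)%C). nra. }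
  assert (0 < 1 / (2 * PI) * (Cmod (1 - a * Cconj b)%C ^ 2 / (1 - Cmod (a * Cconj b)%C ^ 2))).
  { apply Rmult_lt_0_compat. apply Rdiv_lt_0_compat; lra. apply Rdiv_lt_0_compat; auto. nra. }
  revert H0. generalize (1 / (2 * PI) * (Cmod (1 - a * Cconj b)%C ^ 2 / (1 - Cmod (a * Cconj b)%C ^ 2))).
  intros r Hr E. injection E. lra.
Qed.

Lemma Cmult_integral (x y : C) : (x * y)%C = RtoC 0 -> x = RtoC 0 \/ y = RtoC 0.
Proof. intros E. destruct (Ceq_dec x (RtoC 0)) as [Hx|Hx]; auto. right.
  replace y with (/ x * (x * y))%C by (field; auto). rewrite E. ring. Qed.

Theorem corollary1 (phi1 phi2 : C) :
  in_disc phi1 -> in_disc phi2 ->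
  (expect phi1 phi2 = RtoC 0 <-> phi1 = Copp phi2).
Proof.
  unfold in_disc. intros Ha Hb. rewrite expect_val by auto.
  set (a := phi1) in *. set (b := phi2) in *.
  assert (H9 : (1 - Cconj a * b)%C <> RtoC 0).
  { apply nz1. rewrite Cmod_mult, Cmod_conj. pose proof (Cmod_ge_0 a). pose proof (Cmod_ge_0 b). nra. }
  assert (H10 : (1 - a * Cconj b)%C <> RtoC 0).
  { apply nz1. rewrite Cmod_mult, Cmod_conj. pose proof (Cmod_ge_0 a). pose proof (Cmod_ge_0 b). nra. }
  assert (HPI : RtoC (2 * PI) <> RtoC 0).
  { intro E. apply (f_equal fst) in E. simpl in E. pose proof PI_RGT_0. lra. }
  split.
  - intros E.
    assert (E2 : (b * (1 - a * Cconj b) + a * (1 - Cconj a * b))%C = RtoC 0).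
    { apply Cmult_integral in E. destruct E as [E|E]. exfalso; apply (Kc_nz a b); auto.
      apply Cmult_integral in E. destruct E as [E|E]. exfalso; auto.
      replace (b * (1 - a * Cconj b) + a * (1 - Cconj a * b))%C with
        ((b / (1 - Cconj a * b) + a / (1 - a * Cconj b)) * ((1 - Cconj a * b) * (1 - a * Cconj b)))%C by (field; auto).
      rewrite E. ring. }
    assert (E3 : (a * RtoC (1 - Cmod b ^ 2))%C = (- b * RtoC (1 - Cmod a ^ 2))%C).
    { rewrite !RtoC_minus, !Cmod2_conj.
      replace (a * (1 - b * Cconj b))%C with ((b * (1 - a * Cconj b) + a * (1 - Cconj a * b)) - b * (1 - a * Cconj a))%C by ring.
      rewrite E2. ring. }
    assert (E4 := f_equal Cmod E3). rewrite !Cmod_mult, Cmod_opp, !Cmod_R in E4.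
    pose proof (Cmod_ge_0 a). pose proof (Cmod_ge_0 b).
    rewrite !Rabs_pos_eq in E4 by nra.
    assert (HH : (Cmod a - Cmod b) * (1 + Cmod a * Cmod b) = 0) by (ring_simplify; ring_simplify in E4; lra).
    apply Rmult_integral in HH. destruct HH as [HH|HH]; [| nra].
    assert (Cmod a = Cmod b) by lra.
    rewrite H1 in E3. assert (Hs : RtoC (1 - Cmod b ^ 2) <> RtoC 0).
    { intro Ez. injection Ez. nra. }
    apply (f_equal (fun x => x / RtoC (1 - Cmod b ^ 2))%C) in E3.
    replace a with (a * RtoC (1 - Cmod b ^ 2) / RtoC (1 - Cmod b ^ 2))%C by (field; auto).
    rewrite E3. field. auto.
  - intros E. rewrite E in H9, H10 |- *. rewrite Copp_conj in H9 |- *.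
    assert (Z : (b / (1 - - Cconj b * b) + - b / (1 - - b * Cconj b))%C = RtoC 0).
    { replace (1 - - b * Cconj b)%C with (1 - - Cconj b * b)%C by ring. field. auto. }
    rewrite Z. ring.
Qed.
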